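(* Let $(\Theta,d)$ be a totally bounded semimetric space. If $(X^\theta)_{\theta\in\Theta}$ is a nearly sub-Gaussian random field w.r.t. $d$, then there is some $\varepsilon>1$ such that $(X^\theta)_{\theta\in\Theta}$ is a sub-Gaussian random field w.r.t. $\overline d:=\varepsilon\cdot d$.
   Context: A centered stochastic process $(X^\theta)_{\theta\in\Theta}$ is a nearly sub-Gaussian random field w.r.t. a semimetric $d$ if there is $C\ge1$ such that $\mathbb E[\exp(\lambda(X^\theta-X^\vartheta))]\le C\exp(\lambda^2d(\theta,\vartheta)^2/2)$ for all $\theta,\vartheta\in\Theta$ and $\lambda>0$; it is a sub-Gaussian random field w.r.t. $d$ if this holds with $C=1$. *)

(* Defs.v *)
From HB Require Import structures.
From mathcomp Require Import all_boot all_order all_algebra.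
From mathcomp Require Import all_classical all_reals all_analysis.
Set Implicit Arguments. Unset Strict Implicit. Unset Printing Implicit Defensive.
Import Order.TTheory GRing.Theory Num.Theory.

Local Open Scope ring_scope.

Definition semimetric (Θ : Type) (R : realType) (d : Θ -> Θ -> R) : Prop :=
  [/\ forall x y, 0 <= d x y,
      forall x, d x x = 0,
      forall x y, d x y = d y x &
      forall x y z, d x z <= d x y + d y z].

Definition totally_bounded_sm (Θ : Type) (R : realType) (d : Θ -> Θ -> R) : Prop :=
  forall e : R, 0 < e -> exists s : seq Θ, forall x, has (fun t => d x t < e) s.

Definition centered_process d (T : measurableType d) (R : realType)
  (P : probability T R) (Θ : Type) (X : Θ -> {RV P >-> R}) : Prop :=
  forall th, P.-integrable setT (EFin \o X th) /\ ('E_P[X th] = 0)%E.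

Definition nearly_subgaussian_field d (T : measurableType d) (R : realType)
  (P : probability T R) (Θ : Type) (X : Θ -> {RV P >-> R}) (dd : Θ -> Θ -> R) : Prop :=
  centered_process X /\
  exists C : R, 1 <= C /\
    forall th vt (l : R), 0 < l ->
      (\int[P]_x (expR (l * (X th x - X vt x)))%:E
        <= (C * expR (l ^+ 2 * dd th vt ^+ 2 / 2))%:E)%E.

Definition subgaussian_field d (T : measurableType d) (R : realType)
  (P : probability T R) (Θ : Type) (X : Θ -> {RV P >-> R}) (dd : Θ -> Θ -> R) : Prop :=
  centered_process X /\
    forall th vt (l : R), 0 < l ->
      (\int[P]_x (expR (l * (X th x - X vt x)))%:E
        <= (expR (l ^+ 2 * dd th vt ^+ 2 / 2))%:E)%E.

(* Main.v *)
Require Import Defs.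
From HB Require Import structures.
From mathcomp Require Import all_boot all_order all_algebra.
From mathcomp Require Import all_classical all_reals all_analysis.
From mathcomp Require Import ring lra.
Import Order.TTheory GRing.Theory Num.Theory.
Local Open Scope ring_scope.
Section Real.
Variable R : realType.

Lemma sq_le_exp (x : R) : x ^+ 2 <= 4 * expR `|x|.
Proof.
have h := expR_ge1Dx (`|x| / 2).
have e : expR `|x| = expR (`|x| / 2) ^+ 2 by rewrite -expRM_natr; congr expR; lra.
have ax : 0 <= `|x| by [].
have : x ^+ 2 = `|x| ^+ 2 by rewrite real_normK ?num_real.
nra.
Qed.

Lemma rem_le (u : R) : expR u - 1 - u <= 4 * u ^+ 2 * (1 + expR u).
Proof.
have e0 := expR_gt0 u.
have [hu|hu] := lerP u (1/2).
  have h1 := expR_ge1Dx (- u).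
  have h2 := expR_ge1Dx u.
  have e1 : expR u * expR (- u) = 1 by rewrite expRxMexpNx_1.
  have e2 : 0 < expR (- u) by apply: expR_gt0.
  have h3 : expR u * (1 - u) <= 1 by nra.
  have h4 : expR u - 1 - u <= u * (expR u - 1) by nra.
  have [u0|u0] := lerP 0 u.
    have : u * (expR u - 1 - u * expR u) <= 0 by apply: mulr_ge0_le0; nra.
    nra.
  have : u * (expR u - 1 - u) <= 0 by apply: mulr_le0_ge0; nra.
  nra.
have : 0 <= (4 * u ^+ 2 - 1) * (1 + expR u) by apply: mulr_ge0; nra.
nra.
Qed.

Lemma ptwise (u t : R) : 1 <= t ->
  expR u <= 1 + u + 32 / t ^+ 2 * (expR (2 * t * u) + expR (- (2 * t * u))).
Proof.
move=> t1.
have h1 := rem_le u.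
have h2 := sq_le_exp (t * u).
have ea : expR (2 * t * `|u|) = expR (t * `|u|) ^+ 2 by rewrite -expRM_natr; congr expR; lra.
have tu : `|t * u| = t * `|u| by rewrite normrM ger0_norm //; lra.
rewrite tu in h2.
have au : 0 <= `|u| by [].
have uu : u <= `|u| by apply: ler_norm.
have nuu : - u <= `|u| by rewrite -normrN ler_norm.
have h3 : expR u <= expR (t * `|u|) by rewrite ler_expR; nra.
have h4 : 1 <= expR (t * `|u|) by rewrite -expR0 ler_expR; nra.
have h5 : expR (2 * t * `|u|) <= expR (2 * t * u) + expR (- (2 * t * u)).
  have p1 := expR_gt0 (2 * t * u).
  have p2 := expR_gt0 (- (2 * t * u)).
  have [u0|u0] := lerP 0 u.
    by rewrite ger0_norm //; lra.
  by rewrite ltr0_norm // mulrN; lra.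
have t2 : 0 < t ^+ 2 by nra.
have key : 4 * u ^+ 2 * (1 + expR u) <= 32 / t ^+ 2 * expR (2 * t * `|u|).
  rewrite ea mulrAC [in X in _ <= X]mulrAC ler_pdivlMr //.
  have : (t * u) ^+ 2 = t ^+ 2 * u ^+ 2 by rewrite exprMn.
  nra.
have : 0 <= 32 / t ^+ 2 by apply: divr_ge0 => //; lra.
nra.
Qed.
End Real.
Section mgf.
Context d (T : measurableType d) (R : realType) (P : probability T R).

Lemma int_of_bound (f : T -> R) (c : R) : measurable_fun setT f ->
  (forall x, 0 <= f x) -> (\int[P]_x (f x)%:E <= c%:E)%E ->
  P.-integrable setT (EFin \o f).
Proof.
move=> mf f0 fc; apply/integrableP; split; first exact/measurable_realfun.measurable_EFinP.
rewrite (eq_integral (fun x => (f x)%:E)); last first.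
  by move=> x _ /=; rewrite ger0_norm.
exact: (le_lt_trans fc (ltry _)).
Qed.

Variables (Y1 Y2 : {RV P >-> R}) (C D : R).
Hypotheses (i1 : P.-integrable setT (EFin \o Y1)) (i2 : P.-integrable setT (EFin \o Y2)).
Hypotheses (e1 : ('E_P[Y1] = 0)%E) (e2 : ('E_P[Y2] = 0)%E).
Hypothesis H12 : forall l, 0 < l ->
  (\int[P]_x (expR (l * (Y1 x - Y2 x)))%:E <= (C * expR (l ^+ 2 * D ^+ 2 / 2))%:E)%E.
Hypothesis H21 : forall l, 0 < l ->
  (\int[P]_x (expR (l * (Y2 x - Y1 x)))%:E <= (C * expR (l ^+ 2 * D ^+ 2 / 2))%:E)%E.

Lemma mexp (Z1 Z2 : {RV P >-> R}) (a : R) :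
  measurable_fun setT (fun x => expR (a * (Z1 x - Z2 x))).
Proof.
apply: measurableT_comp => //; apply: measurable_realfun.measurable_funM => //.
exact: measurable_realfun.measurable_funB.
Qed.


Hypothesis C0 : 0 <= C.

Lemma mgf_bound l s : 0 < l -> l <= s -> 0 <= D -> s * D <= 1 ->
  (\int[P]_x (expR (l * (Y1 x - Y2 x)))%:E
     <= (1 + 64 * C * expR 2 * (l / s) ^+ 2)%:E)%E.
Proof.
move=> l0 ls D0 sD.
have s0 : 0 < s by apply: lt_le_trans ls.
have s20 : 0 < 2 * s by lra.
have sD0 : 0 <= s * D by apply: mulr_ge0 => //; lra.
have eb : (2 * s) ^+ 2 * D ^+ 2 / 2 <= 2.
  have : (2 * s) ^+ 2 * D ^+ 2 / 2 = 2 * ((s * D) * (s * D)) by rewrite !expr2; field.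
  move=> ->; nra.
pose A x := expR ((2 * s) * (Y1 x - Y2 x)).
pose B x := expR ((2 * s) * (Y2 x - Y1 x)).
have bA : (\int[P]_x (A x)%:E <= (C * expR 2)%:E)%E.
  apply: (le_trans (H12 _ s20)); rewrite lee_fin; apply: ler_wpM2l => //.
  by rewrite ler_expR.
have bB : (\int[P]_x (B x)%:E <= (C * expR 2)%:E)%E.
  apply: (le_trans (H21 _ s20)); rewrite lee_fin; apply: ler_wpM2l => //.
  by rewrite ler_expR.
have iA : P.-integrable setT (EFin \o A).
  by apply: int_of_bound bA; [exact: mexp | move=> x; exact: expR_ge0].
have iB : P.-integrable setT (EFin \o B).
  by apply: int_of_bound bB; [exact: mexp | move=> x; exact: expR_ge0].
set c := 32 / (s / l) ^+ 2.
have ce : c = 32 * (l / s) ^+ 2.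
  by rewrite /c; field; rewrite !gt_eqF.
have t1 : 1 <= s / l by rewrite ler_pdivlMr // mul1r.
pose g x := (1 + l * (Y1 x - Y2 x)) + c * (A x + B x).
have hp : forall x, expR (l * (Y1 x - Y2 x)) <= g x.
  move=> x; have := @ptwise R (l * (Y1 x - Y2 x)) (s / l) t1.
  have -> : 2 * (s / l) * (l * (Y1 x - Y2 x)) = 2 * s * (Y1 x - Y2 x).
    by field; lra.
  have -> : - (2 * s * (Y1 x - Y2 x)) = 2 * s * (Y2 x - Y1 x) by ring.
  done.
have iY : P.-integrable setT (fun x => ((Y1 x)%:E - (Y2 x)%:E)%E).
  exact: (integrableB measurableT i1 i2).
have iL : P.-integrable setT (fun x => (1 + l * (Y1 x - Y2 x))%:E).
  apply: (@eq_integrable _ _ _ P _ measurableT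
    (fun x => adde 1%:E (mule l%:E (adde (Y1 x)%:E (oppe (Y2 x)%:E))))).
    by move=> x _ /=; rewrite EFinD EFinM EFinB.
  exact: (integrableD measurableT (finite_measure_integrable_cst P 1 measurableT)
     (integrableZl measurableT l iY)).
have IL : (\int[P]_x (1 + l * (Y1 x - Y2 x))%:E = 1%:E)%E.
  rewrite (eq_integral (fun x => adde 1%:E (mule l%:E (adde (Y1 x)%:E (oppe (Y2 x)%:E))))); last first.
    by move=> x _ /=; rewrite EFinD EFinM EFinB.
  rewrite (integralD measurableT (finite_measure_integrable_cst P 1 measurableT)
     (integrableZl measurableT l iY)).
  rewrite (integralZl measurableT iY) (integralB_EFin measurableT i1 i2).
  rewrite -!expectation_def e1 e2 sube0 mule0 adde0.
  by rewrite expectation_cst.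
have iG : P.-integrable setT (fun x => (c * (A x + B x))%:E).
  apply: (@eq_integrable _ _ _ P _ measurableT
    (fun x => mule c%:E (adde (A x)%:E (B x)%:E))).
    by move=> x _ /=; rewrite EFinM EFinD.
  exact: (integrableZl measurableT c (integrableD measurableT iA iB)).
have IG : (\int[P]_x (c * (A x + B x))%:E =
    c%:E * (\int[P]_x (A x)%:E + \int[P]_x (B x)%:E))%E.
  rewrite (eq_integral (fun x => mule c%:E (adde (A x)%:E (B x)%:E))); last first.
    by move=> x _ /=; rewrite EFinM EFinD.
  rewrite (integralZl measurableT (integrableD measurableT iA iB)).
  by rewrite (integralD measurableT iA iB).
apply: (le_trans (ge0_le_integral P measurableT
   (f2 := fun x => ((1 + l * (Y1 x - Y2 x))%:E + (c * (A x + B x))%:E)%E) _ _ _ _)).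
- by move=> x _; rewrite lee_fin expR_ge0.
- by apply/measurable_realfun.measurable_EFinP; exact: mexp.
- by apply: emeasurable_funD; [exact: measurable_int iL | exact: measurable_int iG].
- by move=> x _; rewrite -EFinD lee_fin; exact: hp.
rewrite integralD // IL IG.
clearbody c.
have h : (c%:E * (\int[P]_x (A x)%:E + \int[P]_x (B x)%:E) <= (c * (2 * (C * expR 2)))%:E)%E.
  rewrite EFinM; apply: lee_wpmul2l; first by rewrite lee_fin ce; apply: mulr_ge0 => //; apply: exprn_ge0; apply: divr_ge0; lra.
  have -> : ((2 * (C * expR 2))%:E = (C * expR 2)%:E + (C * expR 2)%:E)%E.
    by rewrite -EFinD; congr EFin; ring.
  exact: leeD bA bB.
apply: (le_trans (leeD2l _ h)); rewrite -EFinD lee_fin ce.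
have -> : 32 * (l / s) ^+ 2 * (2 * (C * expR 2)) = 64 * C * expR 2 * (l / s) ^+ 2 by ring.
done.
Qed.

End mgf.
Theorem lemmaA1 (d : measure_display) (T : measurableType d) (R : realType)
  (P : probability T R) (Θ : Type) (dd : Θ -> Θ -> R) (X : Θ -> {RV P >-> R}) :
  semimetric dd -> totally_bounded_sm dd ->
  nearly_subgaussian_field X dd ->
  exists eps : R, 1 < eps /\ subgaussian_field X (fun th vt => eps * dd th vt).
Proof.
move=> [d0 dxx dsym dtri] _ [cent [C [C1 HC]]].
have C0 : 0 <= C by lra.
pose M := 64 * C * expR 2.
have M0 : 0 <= M by rewrite /M; apply: mulr_ge0; [lra | exact: expR_ge0].
pose eps := 2 + 2 * M + 2 * C.
have eps2 : 2 <= eps by rewrite /eps; lra.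
exists eps; split; first lra.
split => // th vt l l0.
set D := dd th vt.
have D0 : 0 <= D by exact: d0.
have [i1 ex1] := cent th; have [i2 ex2] := cent vt.
have H12 := HC th vt.
have H21 : forall l, 0 < l ->
  (\int[P]_x (expR (l * (X vt x - X th x)))%:E <= (C * expR (l ^+ 2 * D ^+ 2 / 2))%:E)%E.
  by move=> l' l'0; rewrite /D dsym; exact: HC.
have MB := @mgf_bound d T R P (X th) (X vt) C D i1 i2 ex1 ex2 H12 H21 C0.
have -> : l ^+ 2 * (eps * D) ^+ 2 / 2 = eps ^+ 2 / 2 * (l * D) ^+ 2 by ring.
have epsM : M <= eps ^+ 2 / 2.
  have : 0 <= (eps - 2) * eps by apply: mulr_ge0; lra.
  rewrite /eps in eps2 *; nra.
have [lD|lD] := lerP (l * D) 1.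
  have [D00|Dn0] := eqVneq D 0.
    rewrite D00 mulr0 expr0n /= mulr0 expR0.
    apply/lee_addgt0Pr => e e0.
    pose K := M * l ^+ 2.
    have K0 : 0 <= K by rewrite /K; apply: mulr_ge0 => //; apply: exprn_ge0; lra.
    pose s := l + 1 + K / e.
    have Ke : K / e * e = K by rewrite divfK // gt_eqF.
    have Ke0 : 0 <= K / e by apply: divr_ge0 => //; lra.
    have s1 : 1 <= s by rewrite /s; lra.
    have ls : l <= s by rewrite /s; lra.
    have s0 : 0 < s by lra.
    apply: (le_trans (MB l s l0 ls D0 _)); first by rewrite D00 mulr0; lra.
    rewrite -EFinD lee_fin lerD2l.
    have -> : M * (l / s) ^+ 2 = K / s ^+ 2 by rewrite /K expr_div_n; field; rewrite gt_eqF.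
    rewrite ler_pdivrMr; last by apply: exprn_gt0.
    have : K <= e * s by rewrite /s; nra.
    nra.
  have Dp : 0 < D by rewrite lt_neqAle eq_sym Dn0 D0.
  have ls : l <= 1 / D by rewrite ler_pdivlMr // mul1r.
  apply: (le_trans (MB l (1 / D) l0 ls D0 _)).
    by rewrite mul1r mulVf // gt_eqF.
  rewrite lee_fin.
  have -> : l / (1 / D) = l * D by field; rewrite gt_eqF.
  apply: (le_trans (expR_ge1Dx _)); rewrite ler_expR.
  apply: ler_wpM2r; first exact: exprn_ge0 (mulr_ge0 (ltW l0) D0).
  done.
apply: (le_trans (H12 l l0)); rewrite lee_fin.
have h1 := expR_ge1Dx C.
have ea := expR_gt0 (l ^+ 2 * D ^+ 2 / 2).
apply: (le_trans (ler_wpM2r (ltW ea) (_ : C <= expR C))); first lra.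
rewrite -expRD ler_expR.
have -> : l ^+ 2 * D ^+ 2 / 2 = (l * D) ^+ 2 / 2 by ring.
have u1 : 1 <= (l * D) ^+ 2 by nra.
have : 1 + 2 * C <= eps ^+ 2.
  have : 0 <= (eps - 2) * eps by apply: mulr_ge0; lra.
  rewrite /eps in eps2 *; nra.
nra.
Qed.
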